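(* Let $K \ge 1$ be an integer and let $\Phi \in \mathbb{R}^{M \times N}$ satisfy the restricted isometry property of order $K+1$ with isometry constant $\delta < \frac{1}{3}$. Let $x \in \mathbb{R}^N$ with $\|x\|_0 \le K$, and let $x'(1), x'(2), \dots$ denote the entries of $x$ ordered by magnitude, $|x'(1)| \ge |x'(2)| \ge \cdots \ge |x'(K)| \ge 0$, with $x'(K+1) = \cdots = x'(N) = 0$. Suppose that for all $j \in \{1, 2, \dots, K-1\}$, $$\frac{|x'(j)|}{|x'(j+1)|} \ge \alpha, \qquad\text{where}\qquad \alpha > \frac{1 + 2\frac{\delta}{1-\delta}\sqrt{K-1}}{1 - 2\frac{\delta}{1-\delta}}.$$ Then Orthogonal Matching Pursuit applied to $\Phi$ and $y = \Phi x$ recovers $x$ exactly in $K$ iterations, i.e. $x^K = x$.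
   Context: For $x \in \mathbb{R}^N$, $\|x\|_0 := |\mathrm{supp}(x)|$ is the number of nonzero entries. A matrix $\Phi \in \mathbb{R}^{M\times N}$ satisfies the restricted isometry property (RIP) of order $K$ with isometry constant $\delta \in (0,1)$ if $(1-\delta)\|x\|_2^2 \le \|\Phi x\|_2^2 \le (1+\delta)\|x\|_2^2$ for all $x \in \mathbb{R}^N$ with $\|x\|_0 \le K$. Orthogonal Matching Pursuit (OMP) with input $\Phi$ and $y \in \mathbb{R}^M$: initialize $r^0 = y$, $x^0 = 0$, $\Lambda^0 = \emptyset$, $\ell = 0$. Each iteration: compute $h^\ell = \Phi^T r^\ell$; set $\Lambda^{\ell+1} = \Lambda^\ell \cup \{j^*\}$ where $j^*$ is an index maximizing $|h^\ell(j)|$ (if several maxima exist, exactly one is chosen); set $x^{\ell+1} = \arg\min_{z:\, \mathrm{supp}(z) \subseteq \Lambda^{\ell+1}} \|y - \Phi z\|_2$ and $r^{\ell+1} = y - \Phi x^{\ell+1}$; increment $\ell$. The output after $\ell$ iterations is $x^\ell$. *)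

(* Defs.v *)
From HB Require Import structures.
From mathcomp Require Import all_boot all_order all_algebra.
From mathcomp Require Import reals.
Set Implicit Arguments. Unset Strict Implicit. Unset Printing Implicit Defensive.
Import Order.TTheory GRing.Theory Num.Theory.
Local Open Scope ring_scope.

Section OMPDefs.
Variable R : realType.

Definition sqnorm n (v : 'cV[R]_n) : R := \sum_(i < n) (v i 0) ^+ 2.

Definition supp n (v : 'cV[R]_n) : {set 'I_n} := [set i | v i 0 != 0].
Definition l0 n (v : 'cV[R]_n) : nat := #|supp v|.

Definition RIP m n (Phi : 'M[R]_(m, n)) (K : nat) (delta : R) : Prop :=
  0 < delta < 1 /\
  forall v : 'cV[R]_n, (l0 v <= K)%N ->
    (1 - delta) * sqnorm v <= sqnorm (Phi *m v) /\
    sqnorm (Phi *m v) <= (1 + delta) * sqnorm v.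

Definition ls_sol m n (Phi : 'M[R]_(m, n)) (y : 'cV[R]_m) (Lam : {set 'I_n})
    (z : 'cV[R]_n) : Prop :=
  supp z \subset Lam /\
  forall w : 'cV[R]_n, supp w \subset Lam ->
    sqnorm (y - Phi *m z) <= sqnorm (y - Phi *m w).

(* (Lam, xs) is a valid run of OMP with input Phi, y for the first L
   iterations: Lam l = Lambda^l, xs l = x^l, residual r^l = y - Phi x^l. *)
Definition omp_run m n (Phi : 'M[R]_(m, n)) (y : 'cV[R]_m)
    (L : nat) (Lam : nat -> {set 'I_n}) (xs : nat -> 'cV[R]_n) : Prop :=
  Lam 0%N = set0 /\ xs 0%N = 0 /\
  forall l, (l < L)%N ->
    let h := Phi^T *m (y - Phi *m xs l) in
    exists j : 'I_n,
      (forall k : 'I_n, `|h k 0| <= `|h j 0|) /\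
      Lam l.+1 = j |: Lam l /\
      ls_sol Phi y (Lam l.+1) (xs l.+1).

(* magnitudes of the entries of x in nonincreasing order:
   mag_sorted x j = |x'(j+1)| (0-based index j) *)
Definition mag_sorted n (v : 'cV[R]_n) (j : nat) : R :=
  nth 0 (sort (fun a b : R => b <= a) [seq `|v i 0| | i <- enum 'I_n]) j.

End OMPDefs.

(* Main.v *)
Require Import Defs.
From HB Require Import structures.
From mathcomp Require Import all_boot all_order all_algebra.
From mathcomp Require Import reals.
From mathcomp Require Import ring lra zify.
Import Order.TTheory GRing.Theory Num.Theory.
Local Open Scope ring_scope.
Set Implicit Arguments. Unset Strict Implicit. Unset Printing Implicit Defensive.


Section Sorting.
Variable R : realType.
Variable N : nat.
Implicit Type v : 'cV[R]_N.

Let geR := fun a b : R => b <= a.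
Lemma geR_total : total geR.
Proof. by move=> a b; rewrite /geR le_total. Qed.
Lemma geR_trans : transitive geR.
Proof. by move=> a b c; rewrite /geR => h1 h2; apply: le_trans h2 h1. Qed.
Lemma geR_refl : reflexive geR.
Proof. by move=> a; rewrite /geR. Qed.

Lemma card_count (p : pred R) v :
  #|[set i | p `|v i 0|]| = count p (sort geR [seq `|v i 0| | i <- enum 'I_N]).
Proof.
have hp : perm_eq (sort geR [seq `|v i 0| | i <- enum 'I_N]) [seq `|v i 0| | i <- enum 'I_N] by rewrite perm_sort.
rewrite (permP hp) count_map cardsE cardE /enum_mem size_filter.
by rewrite count_filter; apply: eq_count => i; rewrite !inE andbT.
Qed.

Lemma size_srt v : size (sort geR [seq `|v i 0| | i <- enum 'I_N]) = N.
Proof. by rewrite size_sort size_map size_enum_ord. Qed.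

Lemma mag_sorted0 v j : (N <= j)%N -> mag_sorted v j = 0.
Proof. by move=> h; rewrite /mag_sorted nth_default // size_srt. Qed.

Lemma mag_S1 v j : (j < N)%N -> (j.+1 <= #|[set i | (mag_sorted v j <= `|v i 0|)%R]|)%N.
Proof.
move=> hj.
rewrite (card_count (fun a => mag_sorted v j <= a)).
set s := sort _ _.
have ss : sorted geR s by apply: sort_sorted; exact: geR_total.
have hsz : size s = N by apply: size_srt.
rewrite -(cat_take_drop j.+1 s) count_cat.
apply: leq_trans (leq_addr _ _).
have -> : count (fun a => mag_sorted v j <= a) (take j.+1 s) = size (take j.+1 s).
  apply/eqP; rewrite -all_count; apply/(all_nthP 0) => k hk.
  have hk2 : (k <= j)%N by move: hk; rewrite size_take hsz; case: (ltnP j.+1 N); lia.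
  rewrite nth_take; last by lia.
  have := sorted_leq_nth geR_trans geR_refl 0 ss.
  move=> H; apply: (H k j); rewrite ?inE ?hsz //; lia.
by rewrite size_take hsz; case: (ltnP j.+1 N); lia.
Qed.

Lemma mag_S2 v j : (#|[set i | (mag_sorted v j < `|v i 0|)%R]| <= j)%N.
Proof.
rewrite (card_count (fun a => mag_sorted v j < a)).
set s := sort _ _.
have ss : sorted geR s by apply: sort_sorted; exact: geR_total.
have hsz : size s = N by apply: size_srt.
rewrite -(cat_take_drop j s) count_cat.
have -> : count (fun a => mag_sorted v j < a) (drop j s) = 0%N.
  apply/eqP; rewrite -leqn0 leqNgt -has_count; apply/negP => /(has_nthP 0) [k hk].
  rewrite nth_drop size_drop in hk *.
  have := sorted_leq_nth geR_trans geR_refl 0 ss.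
  move=> H; have := H j (j + k)%N; rewrite /geR.
  move: hk; rewrite /mag_sorted -/s => hk.
  have hk' : (k < N - j)%N by move: hk; rewrite hsz.
  have hj1 : (j < size s)%N by rewrite hsz; lia.
  have hj2 : (j + k < size s)%N by rewrite hsz; lia.
  move=> h; have {}h := h hj1 hj2 (leq_addr _ _).
  by rewrite ltNge h.
rewrite addn0; apply: leq_trans (count_size _ _) _.
by rewrite size_take; case: ltnP => // /ltnW.
Qed.
End Sorting.


Section Lin.
Variable R : realType.
Variable n : nat.
Implicit Types a b c : 'cV[R]_n.

Definition dot a b : R := \sum_(i < n) a i 0 * b i 0.

Lemma dotC a b : dot a b = dot b a.
Proof. by apply: eq_bigr => i _; rewrite mulrC. Qed.
Lemma dotDl a b c : dot (a + b) c = dot a c + dot b c.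
Proof. by rewrite /dot -big_split; apply: eq_bigr => i _; rewrite !mxE mulrDl. Qed.
Lemma dotNl a c : dot (- a) c = - dot a c.
Proof. by rewrite /dot -sumrN; apply: eq_bigr => i _; rewrite !mxE mulNr. Qed.
Lemma dotZl t a c : dot (t *: a) c = t * dot a c.
Proof. by rewrite /dot mulr_sumr; apply: eq_bigr => i _; rewrite !mxE mulrA. Qed.
Lemma dotBl a b c : dot (a - b) c = dot a c - dot b c.
Proof. by rewrite dotDl dotNl. Qed.
Lemma dotDr a b c : dot c (a + b) = dot c a + dot c b.
Proof. by rewrite dotC dotDl !(dotC c). Qed.
Lemma dotBr a b c : dot c (a - b) = dot c a - dot c b.
Proof. by rewrite dotC dotBl !(dotC c). Qed.
Lemma dotZr t a c : dot c (t *: a) = t * dot c a.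
Proof. by rewrite dotC dotZl dotC. Qed.
Lemma dot0l c : dot 0 c = 0.
Proof. by rewrite /dot big1 // => i _; rewrite mxE mul0r. Qed.
Lemma dot0r c : dot c 0 = 0.
Proof. by rewrite dotC dot0l. Qed.

Lemma sqE a : sqnorm a = dot a a.
Proof. by apply: eq_bigr => i _; rewrite expr2. Qed.
Lemma sqD a b : sqnorm (a + b) = sqnorm a + 2 * dot a b + sqnorm b.
Proof. rewrite !sqE !dotDl !dotDr (dotC b a); ring. Qed.
Lemma sqB a b : sqnorm (a - b) = sqnorm a - 2 * dot a b + sqnorm b.
Proof. rewrite !sqE !dotBl !dotBr (dotC b a); ring. Qed.
Lemma sqZ t a : sqnorm (t *: a) = t ^+ 2 * sqnorm a.
Proof. rewrite !sqE dotZl dotZr; ring. Qed.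
Lemma sq_ge0 a : 0 <= sqnorm a.
Proof. by apply: sumr_ge0 => i _; apply: sqr_ge0. Qed.
Lemma sq_eq0 a : sqnorm a = 0 -> a = 0.
Proof.
move=> /eqP; rewrite psumr_eq0; last by move=> i _; apply: sqr_ge0.
move=> /allP h; apply/matrixP => i j; rewrite (ord1 j) mxE.
by have := h i (mem_index_enum _); rewrite sqrf_eq0 => /eqP.
Qed.

Lemma dot_delta k c : dot (delta_mx k 0) c = c k 0.
Proof.
rewrite /dot (bigD1 k) //= big1 ?addr0.
  by rewrite mxE !eqxx mul1r.
by move=> i hi; rewrite mxE (negbTE hi) mul0r.
Qed.

Lemma sq_delta k : sqnorm (delta_mx k 0 : 'cV[R]_n) = 1.
Proof. by rewrite sqE dot_delta mxE !eqxx. Qed.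

Lemma supp_subP a (A : {set 'I_n}) :
  reflect (forall i, i \notin A -> a i 0 = 0) (supp a \subset A).
Proof.
apply: (iffP subsetP) => h i.
  by move=> hi; apply/eqP; apply: contraNT hi => hne; apply: h; rewrite inE.
by rewrite inE; apply: contraR => hi; rewrite h.
Qed.

End Lin.

Lemma dot_mul (R : realType) m n (A : 'M[R]_(m, n)) a b :
  dot (A *m a) b = dot a (A^T *m b).
Proof.
rewrite /dot; under eq_bigr do rewrite mxE mulr_suml.
rewrite exchange_big /=; apply: eq_bigr => j _.
rewrite mxE mulr_sumr; apply: eq_bigr => i _; rewrite !mxE; ring.
Qed.


Section Rip.
Variable R : realType.
Variables (m n K : nat) (Phi : 'M[R]_(m, n)) (d : R).
Hypothesis hR : RIP Phi K d.
Implicit Types a b c : 'cV[R]_n.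

Lemma suppD a b (A : {set 'I_n}) : supp a \subset A -> supp b \subset A -> supp (a + b) \subset A.
Proof. by move=> /supp_subP ha /supp_subP hb; apply/supp_subP => i hi; rewrite mxE ha ?hb ?addr0. Qed.
Lemma suppN a (A : {set 'I_n}) : supp a \subset A -> supp (- a) \subset A.
Proof. by move=> /supp_subP ha; apply/supp_subP => i hi; rewrite mxE ha ?oppr0. Qed.
Lemma suppB a b (A : {set 'I_n}) : supp a \subset A -> supp b \subset A -> supp (a - b) \subset A.
Proof. by move=> ha hb; apply: suppD => //; apply: suppN. Qed.
Lemma suppZ t a (A : {set 'I_n}) : supp a \subset A -> supp (t *: a) \subset A.
Proof. by move=> /supp_subP ha; apply/supp_subP => i hi; rewrite mxE ha ?mulr0. Qed.
Lemma supp_sub_l0 a (A : {set 'I_n}) : supp a \subset A -> (l0 a <= #|A|)%N.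
Proof. by move=> h; apply: subset_leq_card. Qed.

Lemma rip_lo a (A : {set 'I_n}) : supp a \subset A -> (#|A| <= K)%N ->
  (1 - d) * sqnorm a <= sqnorm (Phi *m a).
Proof.
move=> ha hA; case: hR => _ h.
by have [] := h a (leq_trans (supp_sub_l0 ha) hA).
Qed.

Lemma rip_hi a (A : {set 'I_n}) : supp a \subset A -> (#|A| <= K)%N ->
  sqnorm (Phi *m a) <= (1 + d) * sqnorm a.
Proof.
move=> ha hA; case: hR => _ h.
by have [] := h a (leq_trans (supp_sub_l0 ha) hA).
Qed.

Lemma polar1 a b (A : {set 'I_n}) : (#|A| <= K)%N -> supp a \subset A -> supp b \subset A ->
  `|dot (Phi *m a) (Phi *m b) - dot a b| <= d * (sqnorm a + sqnorm b) / 2.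
Proof.
move=> hA ha hb.
have l1 := rip_lo (suppD ha hb) hA.
have h1 := rip_hi (suppD ha hb) hA.
have l2 := rip_lo (suppB ha hb) hA.
have h2 := rip_hi (suppB ha hb) hA.
move: l1 h1 l2 h2; rewrite mulmxDr mulmxBr !sqB !sqD.
move: (sqnorm a) (sqnorm b) (dot a b) (sqnorm (Phi *m a)) (sqnorm (Phi *m b))
  (dot (Phi *m a) (Phi *m b)) => A1 B1 D1 A2 B2 D2.
move=> l1 h1 l2 h2; rewrite ler_norml; apply/andP; split; nra.
Qed.

Lemma polar a b (A : {set 'I_n}) (c : R) : (#|A| <= K)%N -> supp a \subset A -> supp b \subset A ->
  0 < c ->
  `|dot (Phi *m a) (Phi *m b) - dot a b| <= d * (c * sqnorm a + sqnorm b / c) / 2.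
Proof.
move=> hA ha hb hc.
have := polar1 hA (suppZ c ha) hb.
rewrite -scalemxAr dotZl dotZl sqZ -mulrBr normrM gtr0_norm //.
move: (`|_|) (sqnorm a) (sqnorm b) => X A1 B1 h.
have -> : d * (c * A1 + B1 / c) / 2 = (d * (c ^+ 2 * A1 + B1) / 2) / c by field; lra.
by rewrite ler_pdivlMr // mulrC.
Qed.

End Rip.


Lemma ls_orth (R : realType) m n (Phi : 'M[R]_(m, n)) y (L : {set 'I_n}) z w :
  ls_sol Phi y L z -> supp w \subset L -> dot (Phi *m w) (y - Phi *m z) = 0.
Proof.
move=> [hz hmin] hw.
set D := dot _ _; set S := sqnorm (Phi *m w).
have hS : 0 <= S by apply: sq_ge0.
set t := D / (S + 1).
have ht : t * (S + 1) = D by rewrite /t divfK //; apply: lt0r_neq0; lra.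
have := hmin (z + t *: w) (suppD hz (suppZ t hw)).
rewrite mulmxDr -scalemxAr opprD addrA (sqB (y - Phi *m z)) dotZr sqZ -/S.
rewrite (dotC (y - _)) -/D => h.
have ht2 : t ^+ 2 * (S + 2) <= 0 by nra.
have : t = 0.
  have : t ^+ 2 <= 0 by nra.
  by move=> h2; apply/eqP; rewrite -sqrf_eq0 eq_le h2 sqr_ge0.
by move=> t0; rewrite -ht t0 mul0r.
Qed.


Lemma arith1 (R : realType) (d dp S Q Rr E c : R) : 0 < d -> d < 1/3 -> dp = d / (1 - d) ->
  S = Q + Rr -> Q <= dp ^+ 2 * Rr -> 0 <= Rr -> E = d * c -> c ^+ 2 = S -> E ^+ 2 <= dp ^+ 2 * Rr.
Proof.
move=> h1 h2 hdp hS hQ hR hE hc.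
have e : d ^+ 2 * (dp ^+ 2 + 1) = dp ^+ 2 * (d ^+ 2 + (1 - d) ^+ 2) by rewrite hdp; field; lra.
have h3 : d ^+ 2 + (1 - d) ^+ 2 <= 1 by nra.
have h4 : d ^+ 2 * (dp ^+ 2 + 1) <= dp ^+ 2.
  by rewrite e ler_piMr ?sqr_ge0.
rewrite hE exprMn hc hS.
have h5 : Q + Rr <= (dp ^+ 2 + 1) * Rr by lra.
apply: le_trans (_ : d ^+ 2 * ((dp ^+ 2 + 1) * Rr) <= _).
  by rewrite ler_wpM2l ?sqr_ge0.
by rewrite mulrA ler_wpM2r.
Qed.

Lemma arith2 (R : realType) (dp s al a be Rr E : R) : 0 < dp -> 2 * dp < 1 -> 0 <= s ->
  (1 + 2 * dp * s) / (1 - 2 * dp) < al -> 0 < be -> a = al * be ->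
  Rr <= a ^+ 2 + s ^+ 2 * be ^+ 2 -> E ^+ 2 <= dp ^+ 2 * Rr -> 0 <= E -> 2 * E < a - be.
Proof.
move=> h1 h2 h3 h4 h5 h6 h7 h8 h9.
move: h4; rewrite ltr_pdivrMr; last lra.
move=> h4.
have hG : 2 * dp * (a + s * be) < a - be.
  have k := h4; rewrite -(ltr_pM2r h5) in k.
  rewrite h6 -subr_gt0.
  have -> : al * be - be - 2 * dp * (al * be + s * be) = al * (1 - 2 * dp) * be - (1 + 2 * dp * s) * be by ring.
  by rewrite subr_gt0.
have hal : 0 < al.
  have : 0 < al * (1 - 2 * dp).
    apply: le_lt_trans h4; have : 0 <= 2 * dp * s by apply: mulr_ge0 => //; lra.
    lra.
  by rewrite pmulr_lgt0 //; lra.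
have ha0 : 0 < a by rewrite h6 mulr_gt0.
have hsb : 0 <= s * be by apply: mulr_ge0 => //; lra.
have hG0 : 0 <= 2 * dp * (a + s * be).
  apply: mulr_ge0; lra.
have hsq : (2 * E) ^+ 2 < (a - be) ^+ 2.
  apply: le_lt_trans (_ : (2 * dp * (a + s * be)) ^+ 2 < _); last first.
    by rewrite ltr_pXn2r // ?nnegrE; lra.
  have hx : 0 <= a * (s * be) by apply: mulr_ge0; lra.
  have hRr : Rr <= (a + s * be) ^+ 2.
    apply: le_trans h7 _; rewrite -subr_ge0.
    have -> : (a + s * be) ^+ 2 - (a ^+ 2 + s ^+ 2 * be ^+ 2) = 2 * (a * (s * be)) by ring.
    by apply: mulr_ge0.
  have -> : (2 * E) ^+ 2 = 4 * E ^+ 2 by ring.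
  have -> : (2 * dp * (a + s * be)) ^+ 2 = 4 * (dp ^+ 2 * (a + s * be) ^+ 2) by ring.
  rewrite ler_pM2l; last lra.
  by apply: le_trans h8 _; rewrite ler_wpM2l ?sqr_ge0.
move: hsq; rewrite ltr_pXn2r // ?nnegrE; lra.
Qed.

Lemma natL (l K : nat) : (l.+2 <= K)%N -> (l.+1 <= K.-1)%N.
Proof. lia. Qed.
Lemma natM (T : finType) (js : T) (A : {pred T}) (K : nat) :
  #|A| = ((js \in A) + #|[predD1 A & js]|)%N -> js \in A -> (#|A| <= K)%N ->
  (#|[predD1 A & js]| <= K.-1)%N.
Proof. move=> e h; rewrite e h; move: (#|_|) => a; rewrite add1n; lia. Qed.
Lemma natN (b : bool) (t K : nat) : (t <= K)%N -> (b + t <= K.+1)%N.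
Proof. by case: b => /=; lia. Qed.

Lemma hQ_lem (R : realType) (d Q Rr D SQ : R) : 0 < d -> d < 1/3 -> (1 - d) * Q <= SQ ->
  SQ + D = 0 -> - (d * (d / (1 - d) * Rr + Q / (d / (1 - d))) / 2) <= D ->
  Q <= (d / (1 - d)) ^+ 2 * Rr.
Proof.
move=> h1 h2 h3 h4 h5.
have e1 : d * (d / (1 - d) * Rr + Q / (d / (1 - d))) / 2 =
     (1 - d) * ((d / (1 - d)) ^+ 2 * Rr + Q) / 2.
  by field; lra.
move: h5; rewrite e1; move: ((d / (1 - d)) ^+ 2 * Rr) => P h5.
have : (1 - d) * (Q - P) <= 0 by nra.
by rewrite pmulr_rle0 ?subr_le0 //; lra.
Qed.

Lemma halfE (R : realType) (d c : R) : 0 < c -> d * (c + c ^+ 2 / c) / 2 = d * c.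
Proof. by move=> h; field; lra. Qed.

Section Main.
Variable R : realType.
Variables (M N K : nat) (Phi : 'M[R]_(M, N)) (delta alpha : R) (x : 'cV[R]_N).
Hypotheses (hK : (1 <= K)%N) (hR : RIP Phi K.+1 delta) (hd : delta < 1/3) (hx : (l0 x <= K)%N).
Let dp := delta / (1 - delta).
Hypothesis halpha : alpha > (1 + 2 * dp * Num.sqrt (K.-1)%:R) / (1 - 2 * dp).
Hypothesis hs : forall j : nat, (1 <= j)%N -> (j <= K.-1)%N ->
     mag_sorted x j.-1 >= alpha * mag_sorted x j.

Lemma d_pos : 0 < delta.
Proof. by case: hR => /andP[]. Qed.
Lemma dp_pos : 0 < dp.
Proof. have := d_pos; have := hd; rewrite /dp => h1 h; apply: divr_gt0 => //; lra. Qed.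
Lemma dp_lt : 2 * dp < 1.
Proof.
have := d_pos; have := hd; rewrite /dp => h1 h.
rewrite mulrA ltr_pdivrMr; lra.
Qed.
Lemma alpha_gt1 : 1 < alpha.
Proof.
have ha := halpha; apply: le_lt_trans ha.
have h1 := dp_lt; have h2 := dp_pos.
have h3 : 0 <= Num.sqrt (K.-1)%:R :> R by apply: sqrtr_ge0.
rewrite ler_pdivlMr; last lra.
nra.
Qed.

Let T := supp x.
Lemma cardT : (#|T| <= K)%N.
Proof. exact: hx. Qed.

Variables (Lam : nat -> {set 'I_N}) (xs : nat -> 'cV[R]_N).
Hypothesis hrun : omp_run Phi (Phi *m x) K Lam xs.

Definition orth l := forall w, supp w \subset Lam l ->
  dot (Phi *m w) (Phi *m (x - xs l)) = 0.

Definition Inv l := [/\ supp (xs l) \subset Lam l, (#|Lam l| <= l)%N, orth l &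
  xs l = x \/ [/\ Lam l \subset T, #|Lam l| = l &
     forall i k, i \in Lam l -> k \notin Lam l -> `|x k 0| < `|x i 0| ] ].

Lemma inv0 : Inv 0.
Proof.
case: hrun => h0 [x0 _]; split; rewrite /orth ?h0 ?x0 ?cards0 //.
- by apply/supp_subP => i _; rewrite mxE.
- move=> w /supp_subP hw.
  have -> : w = 0 by apply/matrixP => i j; rewrite (ord1 j) mxE hw // inE.
  by rewrite mulmx0 dot0l.
- by right; split; rewrite ?sub0set ?cards0 // => i k; rewrite inE.
Qed.

Lemma step_common l : (l < K)%N -> (#|Lam l| <= l)%N ->
  exists j : 'I_N,
    [/\ forall k : 'I_N, `|(Phi^T *m (Phi *m x - Phi *m xs l)) k 0| <=
                         `|(Phi^T *m (Phi *m x - Phi *m xs l)) j 0|,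
        Lam l.+1 = j |: Lam l, supp (xs l.+1) \subset Lam l.+1,
        (#|Lam l.+1| <= l.+1)%N & orth l.+1].
Proof.
move=> hl hc; case: hrun => _ [_ /(_ l hl)] /= [j [hmax [hL hls]]].
exists j; split => //.
- by case: hls.
- by rewrite hL cardsU1 -add1n leq_add ?leq_b1.
- move=> w hw; rewrite mulmxBr; exact: ls_orth hls hw.
Qed.

Lemma fix_x l : (l <= K)%N -> supp (xs l) \subset Lam l -> (#|Lam l| <= l)%N ->
  orth l -> supp x \subset Lam l -> xs l = x.
Proof.
move=> hl hs1 hc ho hxs.
have hu : supp (x - xs l) \subset Lam l by apply: suppB.
have := ho _ hu; rewrite -sqE => h0.
have hc2 : (#|Lam l| <= K.+1)%N := leq_trans hc (leq_trans hl (leqnSn K)).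
have := rip_lo hR hu hc2; rewrite h0 => h1.
have hd0 := d_pos; have hd1 := hd.
have h2 := sq_ge0 (x - xs l).
have : sqnorm (x - xs l) = 0 by nra.
by move/sq_eq0/eqP; rewrite subr_eq0 => /eqP.
Qed.

Lemma stepA l : (l < K)%N -> Inv l -> xs l = x -> Inv l.+1.
Proof.
move=> hl [hs1 hc ho _] hxl.
have [j [_ hL hs2 hc2 ho2]] := step_common hl hc.
have hxs : supp x \subset Lam l.+1.
  by rewrite hL -hxl; apply: subset_trans hs1 _; apply: subsetUr.
have := fix_x hl hs2 hc2 ho2 hxs => e.
by split => //; left.
Qed.


Lemma key l : (l < K)%N -> supp (xs l) \subset Lam l -> orth l ->
  Lam l \subset T -> #|Lam l| = l ->
  (forall i k, i \in Lam l -> k \notin Lam l -> `|x k 0| < `|x i 0|) ->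
  forall k0, k0 \notin Lam l -> x k0 0 != 0 ->
  exists js, [/\ js \notin Lam l, js \in T,
    (forall k, k \notin Lam l -> k != js -> `|x k 0| < `|x js 0|) &
    (forall k, k != js -> `|(Phi^T *m (Phi *m x - Phi *m xs l)) k 0| <
                          `|(Phi^T *m (Phi *m x - Phi *m xs l)) js 0|)].
Proof.
move=> hl hs1 ho hLT hcL hord k0 hk0 hxk0.
set L := Lam l.
have [js hjsL hmax] : exists2 js, js \notin L & forall k, k \notin L -> `|x k 0| <= `|x js 0|.
  by case: (@arg_maxP _ _ _ k0 (fun k => k \notin L) (fun k => `|x k 0|) hk0) => js h1 h2; exists js.
set a := `|x js 0|.
have ha0 : 0 < a by apply: lt_le_trans (hmax _ hk0); rewrite normr_gt0.
have hjsT : js \in T by rewrite inE -normr_gt0.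
have hal := alpha_gt1.
set be := a / alpha.
have hbe0 : 0 < be by apply: divr_gt0 => //; lra.
have hbea : be < a by rewrite /be ltr_pdivrMr ?ltr_pMr //; lra.

have hsl : mag_sorted x l <= a.
  rewrite leNgt; apply/negP => hlt.
  case: (ltnP l N) => hlN; last by move: hlt; rewrite mag_sorted0 //; lra.
  have := mag_S1 x hlN.
  have sub : [set i | (mag_sorted x l <= `|x i 0|)%R] \subset L.
    apply/subsetP => i; rewrite inE => hi; apply: contraLR hi => hiL.
    by rewrite -ltNge; apply: le_lt_trans (hmax _ hiL) hlt.
  have := subset_leq_card sub; rewrite hcL => h2 h1.
  by have := leq_trans h1 h2; rewrite ltnn.
have hsmall : forall k, k \notin L -> k != js -> `|x k 0| <= be.
  move=> k hkL hkj.
  case: (eqVneq (x k 0) 0) => [->|hxk]; first by rewrite normr0; lra.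
  have hkjL : k \notin js |: L by rewrite !inE negb_or hkj.
  have hle : `|x k 0| <= mag_sorted x l.+1.
    rewrite leNgt; apply/negP => hlt.
    have sub : k |: (js |: L) \subset [set i | (mag_sorted x l.+1 < `|x i 0|)%R].
      apply/subsetP => i; rewrite !inE => /orP[/eqP->|/orP[/eqP->|hi]] //.
      - by apply: lt_le_trans hlt (hmax k hkL).
      - by apply: lt_trans hlt (hord i k hi hkL).
    have := subset_leq_card sub; rewrite !cardsU1 hkjL hjsL hcL.
    have := mag_S2 x l.+1 => h2 h1.
    by have := leq_trans h1 h2; rewrite ltnn.
  have hl2 : (l.+2 <= K)%N.
    have sub : k |: (js |: L) \subset T.
      apply/subsetP => i; rewrite !inE => /orP[/eqP->|/orP[/eqP->|hi]].
      - by rewrite ?inE.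
      - by rewrite ?inE -normr_gt0.
      - by have := subsetP hLT i hi; rewrite ?inE.
    have := subset_leq_card sub; rewrite !cardsU1 hkjL hjsL hcL.
    have := cardT => hT h; exact: leq_trans h hT.
  have := hs (j := l.+1) isT (natL hl2); rewrite /= => hsa.
  rewrite /be ler_pdivlMr; last lra.
  rewrite mulrC; apply: le_trans (le_trans hsa hsl).
  by rewrite ler_pM2l //; lra.
set z := xs l.
set u := x - z.
have hzL : forall i, i \notin L -> z i 0 = 0 by apply/supp_subP.
have hu : forall i, i \notin L -> u i 0 = x i 0 by move=> i hi; rewrite !mxE hzL ?subr0.
have huT : supp u \subset T by apply: suppB => //; apply: subset_trans hs1 hLT.
set q : 'cV[R]_N := \col_i (if i \in L then u i 0 else 0).
set r := u - q.
have hqL : supp q \subset L by apply/supp_subP => i hi; rewrite mxE (negbTE hi).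
have hqT : supp q \subset T by apply: subset_trans hqL hLT.
have hrT : supp r \subset T by apply: suppB.
have hrE : forall i, r i 0 = if i \in L then 0 else x i 0.
  move=> i; rewrite !mxE; case: ifP => hi; first by rewrite subrr.
  by rewrite subr0 hzL ?subr0 // hi.
have hqr : dot q r = 0.
  by rewrite /dot big1 // => i _; rewrite hrE mxE; case: ifP; rewrite ?mulr0 ?mul0r.
have huqr : u = q + r by rewrite /r addrC subrK.
have hPq : sqnorm (Phi *m q) + dot (Phi *m q) (Phi *m r) = 0.
  by have := ho _ hqL; rewrite -/z -/u huqr mulmxDr dotDr -sqE.
have hcT1 : (#|T| <= K.+1)%N := leqW cardT.
have hlo := rip_lo hR hqT hcT1.
have hdp := dp_pos.
have hpol := polar hR hcT1 hrT hqT hdp.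
have hd0 := d_pos; have hd1 := hd.
have hQ : sqnorm q <= dp ^+ 2 * sqnorm r.
  move: hpol; rewrite (dotC r q) hqr subr0 (dotC (Phi *m r)) ler_norml => /andP[hp1 _].
  exact: (hQ_lem hd0 hd1 hlo hPq hp1).
have hS : sqnorm u = sqnorm q + sqnorm r by rewrite huqr sqD hqr mulr0 addr0.
have hRa : a ^+ 2 <= sqnorm r.
  rewrite /sqnorm (bigD1 js) //= hrE (negbTE hjsL) -(real_normK (num_real (x js 0))) -/a.
  rewrite lerDl; apply: sumr_ge0 => i _; apply: sqr_ge0.
have hRb : sqnorm r <= a ^+ 2 + (K.-1)%:R * be ^+ 2.
  rewrite /sqnorm (bigD1 js) //= hrE (negbTE hjsL) -(real_normK (num_real (x js 0))) -/a lerD2l.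
  apply: (@le_trans _ _ (\sum_(i | i != js) (if i \in T then be ^+ 2 else 0))).
    apply: ler_sum => i hij; rewrite hrE.
    case: ifP => hiL; first by case: ifP => _; rewrite ?expr0n ?sqr_ge0.
    case: ifP => hiT.
      rewrite -(real_normK (num_real (x i 0))) lerXn2r ?nnegrE ?normr_ge0 ?(ltW hbe0) //.
      by apply: hsmall => //; rewrite hiL.
    by move: hiT; rewrite inE => /negbFE/eqP ->; rewrite expr0n.
  rewrite -big_mkcondr /=.
  rewrite (eq_bigl (fun i => i \in [predD1 T & js])); last by move=> i; rewrite !inE.
  rewrite sumr_const -(mulr_natl (be ^+ 2)); apply: ler_wpM2r; first exact: sqr_ge0.
  rewrite ler_nat; exact: (natM (cardD1 js T) (hjsT) cardT).
have hq0 := sq_ge0 q.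
have hS0 : 0 < sqnorm u.
  rewrite hS; have : 0 < a ^+ 2 by rewrite exprn_gt0.
  lra.
set S := sqnorm u.
set c := Num.sqrt S.
have hc0 : 0 < c by rewrite sqrtr_gt0.
have hc2 : c ^+ 2 = S by rewrite sqr_sqrtr //; exact: ltW hS0.
set E := delta * c.
set h := Phi^T *m (Phi *m x - Phi *m z).
have hE : forall k, `|h k 0 - u k 0| <= E.
  move=> k.
  have hA : (#|k |: T| <= K.+1)%N by rewrite cardsU1; apply: natN cardT.
  have he : supp (delta_mx k 0 : 'cV[R]_N) \subset k |: T.
    apply/supp_subP => i; rewrite !inE negb_or => /andP[hik _].
    by rewrite mxE (negbTE hik).
  have hu2 : supp u \subset k |: T by apply: subset_trans huT (subsetUr _ _).
  have := polar hR hA he hu2 hc0.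
  rewrite sq_delta dot_delta mulr1 -/S -hc2.
  have -> : h k 0 = dot (Phi *m delta_mx k 0) (Phi *m u).
    by rewrite dot_mul dot_delta /h -mulmxBr.
  by rewrite halfE.
have hE0 : 0 <= E by apply: mulr_ge0; lra.
have hE2 : E ^+ 2 <= dp ^+ 2 * sqnorm r.
  apply: (arith1 hd0 hd1 (erefl dp) hS hQ (sq_ge0 r) (erefl E) hc2).
have hsK : 0 <= Num.sqrt (K.-1)%:R :> R by apply: sqrtr_ge0.
have hsK2 : Num.sqrt (K.-1)%:R ^+ 2 = (K.-1)%:R :> R by rewrite sqr_sqrtr ?ler0n.
have hgap : 2 * E < a - be.
  apply: (arith2 hdp dp_lt hsK halpha hbe0 _ _ hE2 hE0).
    by rewrite /be mulrC divfK //; apply: lt0r_neq0; lra.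
  by rewrite hsK2.
have hhk : forall k, `|h k 0| <= `|u k 0| + E.
  move=> k; have := hE k => hk.
  have -> : h k 0 = u k 0 + (h k 0 - u k 0) by rewrite addrCA subrr addr0.
  by apply: le_trans (ler_normD _ _) _; rewrite lerD2l.
have hhjs : a - E <= `|h js 0|.
  have := hE js; rewrite distrC hu // => hk.
  have e : u js 0 = h js 0 + (u js 0 - h js 0) by rewrite addrCA subrr addr0.
  have := ler_normD (h js 0) (u js 0 - h js 0); rewrite -e hu // -/a.
  lra.
exists js; split => //.
  by move=> k hkL hkj; apply: le_lt_trans (hsmall k hkL hkj) hbea.
move=> k hkj; apply: lt_le_trans hhjs.
case: (boolP (k \in L)) => hkL.
  have -> : h k 0 = 0.
    have hw : supp (delta_mx k 0 : 'cV[R]_N) \subset L.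
      apply/supp_subP => i hi; rewrite mxE; case: eqP => // ei.
      by move: hi; rewrite ei hkL.
    by have := ho _ hw; rewrite dot_mul dot_delta /h -mulmxBr.
  rewrite normr0; lra.
have := hhk k; rewrite hu // => hk.
have := hsmall k hkL hkj; lra.
Qed.

Lemma stepB l : (l < K)%N -> Inv l -> Inv l.+1.
Proof.
move=> hl hI; have [hs1 hc ho hcase] := hI.
case: hcase => [hxl | [hLT hcL hord]]; first exact: stepA.
case: (boolP [exists k, (k \notin Lam l) && (x k 0 != 0)]) => [/existsP [k0 /andP [hk0 hxk0]] | hno].
  have [js [hjsL hjsT hjbig hh]] := key hl hs1 ho hLT hcL hord hk0 hxk0.
  have [j [hmax hL hs2 hc2 ho2]] := step_common hl hc.
  have ej : j = js.
    apply/eqP; apply: contraT => hne.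
    by have := hh j hne; rewrite ltNge hmax.
  subst j.
  split => //; right; split.
  - by rewrite hL; apply/subsetP => i; rewrite in_setU1 => /orP[/eqP->|/(subsetP hLT)].
  - by rewrite hL cardsU1 hjsL hcL.
  - move=> i k; rewrite hL !in_setU1 negb_or => /orP[/eqP->|hi] /andP[hkj hkL].
      exact: hjbig.
    exact: hord.
have hxs : supp x \subset Lam l.
  apply/subsetP => i; rewrite inE => hxi; apply: contraT => hiL.
  by move: hno; rewrite negb_exists => /forallP /(_ i); rewrite hiL hxi.
apply: stepA => //; apply: fix_x => //; exact: ltnW.
Qed.

Lemma inv_all l : (l <= K)%N -> Inv l.
Proof.
elim: l => [_|l IH hl]; first exact: inv0.
by apply: stepB => //; apply: IH; apply: ltnW.
Qed.

Lemma final : xs K = x.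
Proof.
have [hs1 hc ho hcase] := inv_all (leqnn K).
case: hcase => [// | [hLT hcL _]].
apply: fix_x => //.
have := cardT => hT.
have hle : (#|T| <= #|Lam K|)%N by rewrite hcL.
have /eqP e : Lam K == T by rewrite eqEcard hLT hle.
by rewrite e subxx.
Qed.
End Main.


Theorem theorem2 (R : realType) (M N K : nat) (Phi : 'M[R]_(M, N))
    (delta alpha : R) (x : 'cV[R]_N) :
  (1 <= K)%N ->
  RIP Phi K.+1 delta ->
  delta < 1 / 3 ->
  (l0 x <= K)%N ->
  alpha > (1 + 2 * (delta / (1 - delta)) * Num.sqrt (K.-1)%:R)
          / (1 - 2 * (delta / (1 - delta))) ->
  (forall j : nat, (1 <= j)%N -> (j <= K.-1)%N ->
     mag_sorted x j.-1 >= alpha * mag_sorted x j) ->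
  forall (Lam : nat -> {set 'I_N}) (xs : nat -> 'cV[R]_N),
    omp_run Phi (Phi *m x) K Lam xs ->
    xs K = x.
Proof.
move=> hK hR hd hx ha hs Lam xs hrun.
by apply: (final hR hd hx ha hs hrun).
Qed.
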